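(* For every compact metric space $X$ there is a sentence $\varphi$ of $L_{\omega_1,\omega}$ in the metric signature such that for every Polish metric space $Y$, $Y\models\varphi$ if and only if $Y$ is isometric to $X$.
   Context: A metric space $(X,d)$ is viewed as a first-order structure in the signature $\{R_q : q\in\mathbb{Q}^+\}$ of binary relation symbols, where $R_q(x,y)$ holds iff $d(x,y)<q$. $L_{\omega_1,\omega}$ is the infinitary logic allowing countable conjunctions and disjunctions and finite quantifier strings. *)

(* Defs.v *)
From Stdlib Require Import Reals QArith List.
Open Scope R_scope.

Record MetricSpace := {
  carrier :> Type;
  dist : carrier -> carrier -> R;
  dist_nonneg : forall x y, 0 <= dist x y;
  dist_eq0 : forall x y, dist x y = 0 <-> x = y;
  dist_sym : forall x y, dist x y = dist y x;
  dist_tri : forall x y z, dist x z <= dist x y + dist y z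
}.

Definition is_open {X : MetricSpace} (U : X -> Prop) : Prop :=
  forall x, U x -> exists eps, eps > 0 /\ forall y, dist X x y < eps -> U y.

Definition compact_space (X : MetricSpace) : Prop :=
  forall (I : Type) (U : I -> X -> Prop),
    (forall i, is_open (U i)) ->
    (forall x, exists i, U i x) ->
    exists l : list I, forall x, exists i, In i l /\ U i x.

Definition cauchy {X : MetricSpace} (s : nat -> X) : Prop :=
  forall eps, eps > 0 -> exists N, forall m n, (m >= N)%nat -> (n >= N)%nat ->
    dist X (s m) (s n) < eps.

Definition converges_to {X : MetricSpace} (s : nat -> X) (x : X) : Prop :=
  forall eps, eps > 0 -> exists N, forall n, (n >= N)%nat -> dist X (s n) x < eps.

Definition complete_space (X : MetricSpace) : Prop :=
  forall s : nat -> X, cauchy s -> exists x, converges_to s x.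

(** Separable: has a countable dense subset (possibly empty, for the empty space). *)
Definition separable (X : MetricSpace) : Prop :=
  exists D : nat -> option X,
    forall (x : X) eps, eps > 0 -> exists n y, D n = Some y /\ dist X x y < eps.

Definition polish (X : MetricSpace) : Prop := complete_space X /\ separable X.

Definition isometric (X Y : MetricSpace) : Prop :=
  exists f : X -> Y,
    (forall a b, dist Y (f a) (f b) = dist X a b) /\
    (forall y, exists x, f x = y).

Definition Qpos := { q : Q | (0 < q)%Q }.

Inductive formula : Type :=
  | FEq : nat -> nat -> formula
  | FRel : Qpos -> nat -> nat -> formula
  | FNot : formula -> formula
  | FAnd : (nat -> formula) -> formula
  | FOr : (nat -> formula) -> formula
  | FExists : nat -> formula -> formula
  | FForall : nat -> formula -> formula.

Fixpoint free (v : nat) (phi : formula) : Prop :=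
  match phi with
  | FEq i j => v = i \/ v = j
  | FRel _ i j => v = i \/ v = j
  | FNot p => free v p
  | FAnd f => exists n, free v (f n)
  | FOr f => exists n, free v (f n)
  | FExists w p => v <> w /\ free v p
  | FForall w p => v <> w /\ free v p
  end.

(** A sentence has no free variables (then every subformula automatically
    has only finitely many free variables, as quantifier strings are finite). *)
Definition sentence (phi : formula) : Prop := forall v, ~ free v phi.

(** Assignments are partial ([None] = unassigned), so that the empty
    metric space is handled correctly; a sentence is evaluated in the
    empty assignment. *)
Definition update {X : Type} (s : nat -> option X) (v : nat) (a : X) : nat -> option X :=
  fun w => if Nat.eqb w v then Some a else s w.

Fixpoint sat (X : MetricSpace) (s : nat -> option X) (phi : formula) : Prop :=
  match phi with
  | FEq i j => match s i, s j with Some a, Some b => a = b | _, _ => False end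
  | FRel q i j => match s i, s j with
                  | Some a, Some b => dist X a b < Q2R (proj1_sig q)
                  | _, _ => False end
  | FNot p => ~ sat X s p
  | FAnd f => forall n, sat X s (f n)
  | FOr f => exists n, sat X s (f n)
  | FExists w p => exists a : X, sat X (update s w a) p
  | FForall w p => forall a : X, sat X (update s w a) p
  end.

Definition models (Y : MetricSpace) (phi : formula) : Prop :=
  sat Y (fun _ => None) phi.

(* Main.v *)
Require Import Defs.
From Stdlib Require Import Reals QArith List Lia Lra Classical ClassicalEpsilon FunctionalExtensionality Cantor.
Open Scope R_scope.

Definition FF : formula :=
  FExists 0 (FAnd (fun n => match n with O => FEq 0 0 | _ => FNot (FEq 0 0) end)).
Definition TT : formula := FNot FF.

Lemma sat_FF (Y : MetricSpace) s : ~ sat Y s FF.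
Proof. simpl. intros [a Ha]. apply (Ha 1%nat). exact (Ha 0%nat). Qed.
Lemma sat_TT (Y : MetricSpace) s : sat Y s TT.
Proof. apply sat_FF. Qed.
Lemma free_FF v : ~ free v FF.
Proof. simpl. intros [H [n Hn]]. destruct n; simpl in Hn; tauto. Qed.
Lemma free_TT v : ~ free v TT.
Proof. apply free_FF. Qed.

Lemma mkq_pos (p q : nat) : (0 < Qmake (Z.of_nat (S p)) (Pos.of_succ_nat q))%Q.
Proof. unfold Qlt; simpl. lia. Qed.
Definition mkq (p q : nat) : Qpos := exist _ _ (mkq_pos p q).

Lemma mkq_val p q : Q2R (proj1_sig (mkq p q)) = INR (S p) / INR (S q).
Proof.
  unfold Q2R; cbn [proj1_sig mkq Qnum Qden]. unfold Rdiv.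
  rewrite !INR_IZR_INZ, Znat.Zpos_P_of_succ_nat, !Znat.Nat2Z.inj_succ. reflexivity.
Qed.

Lemma rat_between (u c : R) : 0 <= u -> u < c ->
  exists p q : nat, u < INR (S p) / INR (S q) < c.
Proof.
  intros Hu Huc.
  destruct (archimed_cor1 (c - u)) as [N [HN HN0]]; [lra|].
  destruct N as [|q]; [lia|].
  assert (Hq : 0 < INR (S q)) by (apply lt_0_INR; lia).
  destruct (archimed (u * INR (S q))) as [H1 H2].
  set (z := up (u * INR (S q))) in *.
  assert (Hz : (1 <= z)%Z).
  { apply le_IZR. assert (0 <= u * INR (S q)) by nra.
    assert (0 < IZR z) by lra.
    apply lt_IZR in H0. apply IZR_le. lia. }
  exists (Z.to_nat (z - 1)), q.
  assert (E : INR (S (Z.to_nat (z - 1))) = IZR z).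
  { rewrite INR_IZR_INZ. f_equal. lia. }
  rewrite E. split.
  - apply (Rmult_lt_reg_r (INR (S q))); auto. unfold Rdiv.
    rewrite Rmult_assoc, Rinv_l by lra. lra.
  - apply (Rmult_lt_reg_r (INR (S q))); auto. unfold Rdiv.
    rewrite Rmult_assoc, Rinv_l by lra.
    assert (c * INR (S q) > u * INR (S q) + 1).
    { assert (/ INR (S q) * INR (S q) = 1) by (field; lra).
      assert ((c - u) * INR (S q) > / INR (S q) * INR (S q)) by (apply Rmult_lt_compat_r; lra).
      nra. }
    lra.
Qed.

Definition Lt (i j : nat) (c : R) : formula :=
  FOr (fun p => FOr (fun q =>
    if Rlt_dec (Q2R (proj1_sig (mkq p q))) c then FRel (mkq p q) i j else FF)).

Lemma sat_Lt (Y : MetricSpace) s i j a b c :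
  s i = Some a -> s j = Some b -> (sat Y s (Lt i j c) <-> Defs.dist Y a b < c).
Proof.
  intros Hi Hj. unfold Lt; cbn [sat]. split.
  - intros [p [q H]]. destruct (Rlt_dec _ c) as [Hl|Hl].
    + cbn [sat] in H. rewrite Hi, Hj in H. lra.
    + exfalso; exact (sat_FF _ _ H).
  - intros H. destruct (rat_between (Defs.dist Y a b) c) as [p [q Hpq]]; auto.
    apply Defs.dist_nonneg.
    exists p, q. destruct (Rlt_dec _ c) as [Hl|Hl].
    + cbn [sat]. rewrite Hi, Hj, mkq_val. lra.
    + rewrite mkq_val in Hl. lra.
Qed.

Lemma free_Lt v i j c : free v (Lt i j c) -> v = i \/ v = j.
Proof.
  simpl. intros [p [q H]]. destruct (Rlt_dec _ c).
  - exact H.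
  - exfalso; exact (free_FF _ H).
Qed.

Definition close (a r e : R) : Prop := r - e <= a < r + e.

Definition Close (i j : nat) (r e : R) : formula :=
  FAnd (fun b => match b with O => Lt i j (r + e) | _ => FNot (Lt i j (r - e)) end).

Lemma sat_Close (Y : MetricSpace) s i j a b r e :
  s i = Some a -> s j = Some b -> (sat Y s (Close i j r e) <-> close (Defs.dist Y a b) r e).
Proof.
  intros Hi Hj. unfold close, Close. cbn [sat]. split.
  - intros H. pose proof (H 0%nat) as H0. pose proof (H 1%nat) as H1. cbn [sat] in H0, H1.
    rewrite (sat_Lt _ _ _ _ _ _ _ Hi Hj) in H0. rewrite (sat_Lt _ _ _ _ _ _ _ Hi Hj) in H1. lra.
  - intros H n. destruct n; cbn [sat].
    + rewrite (sat_Lt _ _ _ _ _ _ _ Hi Hj). lra.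
    + rewrite (sat_Lt _ _ _ _ _ _ _ Hi Hj). lra.
Qed.

Lemma free_Close v i j r e : free v (Close i j r e) -> v = i \/ v = j.
Proof.
  unfold Close; cbn [free]. intros [n H]. destruct n; cbn [free] in H; apply free_Lt in H; exact H.
Qed.

Definition CloseAll (n : nat) (dm : nat -> nat -> R) (e : R) : formula :=
  FAnd (fun i => FAnd (fun j =>
    if andb (Nat.ltb i n) (Nat.ltb j n) then Close i j (dm i j) e else TT)).

Definition env {Y : Type} (n : nat) (t : nat -> Y) : nat -> option Y :=
  fun w => if Nat.ltb w n then Some (t w) else None.

Lemma env_lt {Y : Type} n (t : nat -> Y) i : (i < n)%nat -> env n t i = Some (t i).
Proof. intros H. unfold env. apply Nat.ltb_lt in H. rewrite H. reflexivity. Qed.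

Lemma sat_CloseAll (Y : MetricSpace) n t dm e :
  sat Y (env n t) (CloseAll n dm e) <->
  forall i j, (i < n)%nat -> (j < n)%nat -> close (Defs.dist Y (t i) (t j)) (dm i j) e.
Proof.
  unfold CloseAll; cbn [sat]. split.
  - intros H i j Hi Hj. specialize (H i j).
    pose proof Hi as Hi'; pose proof Hj as Hj'.
    apply Nat.ltb_lt in Hi', Hj'. rewrite Hi', Hj' in H. cbn [andb] in H.
    rewrite (sat_Close _ _ _ _ _ _ _ _ (env_lt n t i Hi) (env_lt n t j Hj)) in H. exact H.
  - intros H i j. destruct (Nat.ltb i n) eqn:Hi, (Nat.ltb j n) eqn:Hj; cbn [andb];
      try apply sat_TT.
    apply Nat.ltb_lt in Hi, Hj.
    rewrite (sat_Close _ _ _ _ _ _ _ _ (env_lt n t i Hi) (env_lt n t j Hj)). auto.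
Qed.

Lemma free_CloseAll v n dm e : free v (CloseAll n dm e) -> (v < n)%nat.
Proof.
  unfold CloseAll; cbn [free]. intros [i [j H]].
  destruct (Nat.ltb i n) eqn:Hi, (Nat.ltb j n) eqn:Hj; cbn [andb] in H;
    try (exfalso; exact (free_TT _ H)).
  apply Nat.ltb_lt in Hi, Hj. apply free_Close in H. lia.
Qed.

Fixpoint QAll (n : nat) (p : formula) : formula :=
  match n with O => p | S n => QAll n (FForall n p) end.
Fixpoint QEx (n : nat) (p : formula) : formula :=
  match n with O => p | S n => QEx n (FExists n p) end.

Definition upd {A : Type} (x : nat -> A) (k : nat) (a : A) : nat -> A :=
  fun i => if Nat.eqb i k then a else x i.

Lemma env_upd {Y : Type} n (t : nat -> Y) a :
  update (env n t) n a = env (S n) (upd t n a).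
Proof.
  apply functional_extensionality. intros w. unfold update, env, upd.
  destruct (Nat.eqb w n) eqn:E.
  - apply Nat.eqb_eq in E. subst. rewrite (proj2 (Nat.ltb_lt _ _)) by lia. reflexivity.
  - apply Nat.eqb_neq in E. destruct (Nat.ltb w n) eqn:E2, (Nat.ltb w (S n)) eqn:E3; auto.
    + apply Nat.ltb_lt in E2. apply Nat.ltb_ge in E3. lia.
    + apply Nat.ltb_ge in E2. apply Nat.ltb_lt in E3. lia.
Qed.

Lemma env_S {Y : Type} n (t : nat -> Y) : env (S n) t = update (env n t) n (t n).
Proof.
  apply functional_extensionality. intros w. unfold update, env.
  destruct (Nat.eqb w n) eqn:E.
  - apply Nat.eqb_eq in E. subst. rewrite (proj2 (Nat.ltb_lt _ _)) by lia. reflexivity.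
  - apply Nat.eqb_neq in E. destruct (Nat.ltb w n) eqn:E2, (Nat.ltb w (S n)) eqn:E3; auto.
    + apply Nat.ltb_lt in E2. apply Nat.ltb_ge in E3. lia.
    + apply Nat.ltb_ge in E2. apply Nat.ltb_lt in E3. lia.
Qed.

Lemma env_0 {Y : Type} (t : nat -> Y) : env 0 t = (fun _ => None).
Proof. apply functional_extensionality. intros w. reflexivity. Qed.

Lemma sat_QAll (Y : MetricSpace) (y0 : Y) n p :
  sat Y (fun _ => None) (QAll n p) <-> forall t : nat -> Y, sat Y (env n t) p.
Proof.
  revert p. induction n as [|n IH]; intros p; simpl.
  - split; intros H. intros t; rewrite env_0; auto.
    specialize (H (fun _ => y0)). rewrite env_0 in H. auto.
  - rewrite IH. simpl. split.
    + intros H t. rewrite env_S. apply H.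
    + intros H t a. rewrite env_upd. apply H.
Qed.

Lemma sat_QEx (Y : MetricSpace) (y0 : Y) n p :
  sat Y (fun _ => None) (QEx n p) <-> exists t : nat -> Y, sat Y (env n t) p.
Proof.
  revert p. induction n as [|n IH]; intros p; simpl.
  - split; intros H. exists (fun _ => y0); rewrite env_0; auto.
    destruct H as [t H]. rewrite env_0 in H. auto.
  - rewrite IH. simpl. split.
    + intros [t [a H]]. rewrite env_upd in H. eauto.
    + intros [t H]. exists t, (t n). rewrite <- env_S. auto.
Qed.

Lemma free_QAll v n p : free v (QAll n p) -> (n <= v)%nat /\ free v p.
Proof.
  revert p. induction n as [|n IH]; intros p; simpl; intros H.
  - split; [lia|auto].
  - apply IH in H. simpl in H. destruct H as [H1 [H2 H3]]. split; [lia|auto].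
Qed.

Lemma free_QEx v n p : free v (QEx n p) -> (n <= v)%nat /\ free v p.
Proof.
  revert p. induction n as [|n IH]; intros p; simpl; intros H.
  - split; [lia|auto].
  - apply IH in H. simpl in H. destruct H as [H1 [H2 H3]]. split; [lia|auto].
Qed.

Definition trunc (n : nat) (m : nat -> nat) : nat -> nat :=
  fun i => if Nat.ltb i n then m i else O.

Fixpoint OrN (n : nat) (F : (nat -> nat) -> formula) : formula :=
  match n with
  | O => F (fun _ => O)
  | S n => FOr (fun a => OrN n (fun m => F (upd m n a)))
  end.
Fixpoint AndN (n : nat) (F : (nat -> nat) -> formula) : formula :=
  match n with
  | O => F (fun _ => O)
  | S n => FAnd (fun a => AndN n (fun m => F (upd m n a)))
  end.

Lemma trunc_upd n m a : upd (trunc n m) n a = trunc (S n) (upd m n a).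
Proof.
  apply functional_extensionality. intros w. unfold upd, trunc.
  destruct (Nat.eqb w n) eqn:E.
  - apply Nat.eqb_eq in E. subst. rewrite (proj2 (Nat.ltb_lt _ _)) by lia. reflexivity.
  - apply Nat.eqb_neq in E. destruct (Nat.ltb w n) eqn:E2, (Nat.ltb w (S n)) eqn:E3; auto.
    + apply Nat.ltb_lt in E2. apply Nat.ltb_ge in E3. lia.
    + apply Nat.ltb_ge in E2. apply Nat.ltb_lt in E3. lia.
Qed.

Lemma trunc_S n m : trunc (S n) m = upd (trunc n m) n (m n).
Proof.
  apply functional_extensionality. intros w. unfold upd, trunc.
  destruct (Nat.eqb w n) eqn:E.
  - apply Nat.eqb_eq in E. subst. rewrite (proj2 (Nat.ltb_lt _ _)) by lia. reflexivity.
  - apply Nat.eqb_neq in E. destruct (Nat.ltb w n) eqn:E2, (Nat.ltb w (S n)) eqn:E3; auto.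
    + apply Nat.ltb_lt in E2. apply Nat.ltb_ge in E3. lia.
    + apply Nat.ltb_ge in E2. apply Nat.ltb_lt in E3. lia.
Qed.

Lemma trunc_0 m : trunc 0 m = (fun _ => O).
Proof. apply functional_extensionality. intros w. reflexivity. Qed.

Lemma trunc_lt n m i : (i < n)%nat -> trunc n m i = m i.
Proof. intros H. unfold trunc. apply Nat.ltb_lt in H. rewrite H. reflexivity. Qed.

Lemma sat_OrN (Y : MetricSpace) s n F :
  sat Y s (OrN n F) <-> exists m, sat Y s (F (trunc n m)).
Proof.
  revert F. induction n as [|n IH]; intros F; simpl.
  - split. intros H. exists (fun _ => O). rewrite trunc_0. auto.
    intros [m H]. rewrite trunc_0 in H. auto.
  - split.
    + intros [a H]. rewrite IH in H. destruct H as [m H]. rewrite trunc_upd in H. eauto.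
    + intros [m H]. exists (m n). rewrite IH. exists m. rewrite <- trunc_S. auto.
Qed.

Lemma sat_AndN (Y : MetricSpace) s n F :
  sat Y s (AndN n F) <-> forall m, sat Y s (F (trunc n m)).
Proof.
  revert F. induction n as [|n IH]; intros F; simpl.
  - split. intros H m. rewrite trunc_0. auto.
    intros H. specialize (H (fun _ => O)). rewrite trunc_0 in H. auto.
  - split.
    + intros H m. specialize (H (m n)). rewrite IH in H. rewrite trunc_S. apply H.
    + intros H a. rewrite IH. intros m. rewrite trunc_upd. apply H.
Qed.

Lemma free_OrN v n F : free v (OrN n F) -> exists m, free v (F m).
Proof.
  revert F. induction n as [|n IH]; intros F; simpl; intros H.
  - eauto.
  - destruct H as [a H]. apply IH in H. destruct H as [m H]. eauto.
Qed.

Lemma free_AndN v n F : free v (AndN n F) -> exists m, free v (F m).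
Proof.
  revert F. induction n as [|n IH]; intros F; simpl; intros H.
  - eauto.
  - destruct H as [a H]. apply IH in H. destruct H as [m H]. eauto.
Qed.

Lemma ball_open (X : MetricSpace) (c : X) r : is_open (fun y => Defs.dist X c y < r).
Proof.
  intros x Hx. exists (r - Defs.dist X c x). split; [lra|].
  intros y Hy. pose proof (Defs.dist_tri X c x y). lra.
Qed.

Lemma dist_self (X : MetricSpace) (x : X) : Defs.dist X x x = 0.
Proof. apply Defs.dist_eq0. reflexivity. Qed.

Lemma finite_net (X : MetricSpace) (HX : compact_space X) r : r > 0 ->
  exists l : list X, forall x, exists c, In c l /\ Defs.dist X c x < r.
Proof.
  intros Hr. destruct (HX X (fun c y => Defs.dist X c y < r)) as [l Hl].
  - intros c. apply ball_open.
  - intros x. exists x. rewrite dist_self. lra.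
  - exists l. exact Hl.
Qed.

Lemma list_min {A : Type} (f : A -> R) (l : list A) :
  (forall a, In a l -> f a > 0) -> exists e, e > 0 /\ forall a, In a l -> e <= f a.
Proof.
  induction l as [|x l IH]; intros H.
  - exists 1. split; [lra|]. intros a [].
  - destruct IH as [e [He1 He2]]. { intros a Ha. apply H. right; auto. }
    exists (Rmin e (f x)). split.
    + apply Rmin_glb_lt; auto. apply H. left; auto.
    + intros a [Ha|Ha].
      * subst. apply Rmin_r.
      * pose proof (He2 a Ha). pose proof (Rmin_l e (f x)). lra.
Qed.

Lemma list_max {A : Type} (f : A -> nat) (l : list A) :
  exists N, forall a, In a l -> (f a <= N)%nat.
Proof.
  induction l as [|x l IH].
  - exists O. intros a [].
  - destruct IH as [N HN]. exists (Nat.max N (f x)). intros a [Ha|Ha].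
    + subst. lia.
    + pose proof (HN a Ha). lia.
Qed.

Definition Ipred (X : MetricSpace) (t : nat -> nat -> X) (k : nat) (x : nat -> X) : Prop :=
  forall e, e > 0 -> forall N, exists n, (n >= N)%nat /\
    forall i, (i < k)%nat -> Defs.dist X (t n i) (x i) < e.

Lemma Ipred_0 X t x : Ipred X t 0 x.
Proof. intros e He N. exists N. split; [lia|]. intros i Hi; lia. Qed.

Lemma cluster_ext (X : MetricSpace) (HX : compact_space X) t k x :
  Ipred X t k x -> exists a, Ipred X t (S k) (upd x k a).
Proof.
  intros HI. apply NNPP. intros Hne.
  set (bad := fun (p : X * R * nat) =>
    let '(a, e, N) := p in e > 0 /\ forall n, (n >= N)%nat ->
      ~ (forall i, (i < S k)%nat -> Defs.dist X (t n i) (upd x k a i) < e)).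
  destruct (HX {p | bad p} (fun p y => Defs.dist X (fst (fst (proj1_sig p))) y < snd (fst (proj1_sig p)))) as [l Hl].
  - intros p. apply ball_open.
  - intros a.
    assert (Hb : exists e N, bad (a, e, N)).
    { apply NNPP. intros Hno. apply Hne. exists a. intros e He N.
      apply NNPP. intros Hno2. apply Hno. exists e, N. split; auto.
      intros n Hn Hall. apply Hno2. exists n. auto. }
    destruct Hb as [e [N Hb]]. exists (exist _ (a, e, N) Hb). simpl.
    rewrite dist_self. destruct Hb; auto.
  - destruct (list_min (fun p => snd (fst (proj1_sig p))) l) as [e0 [He0 He0']].
    { intros [[[a e] N] Hb] _. simpl. destruct Hb; auto. }
    destruct (list_max (fun p => snd (proj1_sig p)) l) as [N0 HN0].
    destruct (HI e0 He0 N0) as [n [Hn Hd]].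
    destruct (Hl (t n k)) as [[[[a e] N] Hb] [Hin Hball]]. simpl in Hball.
    pose proof (He0' _ Hin) as Hle. pose proof (HN0 _ Hin) as HNle. simpl in Hle, HNle.
    destruct Hb as [He Hb]. apply (Hb n). lia.
    intros i Hi. unfold upd. destruct (Nat.eqb i k) eqn:E.
    + apply Nat.eqb_eq in E. subst. rewrite Defs.dist_sym. exact Hball.
    + apply Nat.eqb_neq in E. pose proof (Hd i ltac:(lia)). lra.
Qed.

Section Build.
Context (X : MetricSpace) (HX : compact_space X) (t : nat -> nat -> X) (x0 : X).

Definition step (k : nat) (x : nat -> X) (H : Ipred X t k x) : {a | Ipred X t (S k) (upd x k a)} :=
  constructive_indefinite_description _ (cluster_ext X HX t k x H).

Fixpoint seqs (k : nat) : {x : nat -> X | Ipred X t k x} :=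
  match k with
  | O => exist _ (fun _ => x0) (Ipred_0 X t _)
  | S k => let (x, H) := seqs k in
      exist _ (upd x k (proj1_sig (step k x H))) (proj2_sig (step k x H))
  end.

Definition xs (i : nat) : X := proj1_sig (seqs (S i)) i.

Lemma seqs_xs : forall k i, (i < k)%nat -> proj1_sig (seqs k) i = xs i.
Proof.
  induction k as [|k IH]; intros i Hi; [lia|].
  destruct (Nat.eq_dec i k) as [E2|E2].
  - subst. reflexivity.
  - specialize (IH i ltac:(lia)). rewrite <- IH. simpl. destruct (seqs k) as [x H]. simpl.
    unfold upd. apply Nat.eqb_neq in E2. rewrite E2. reflexivity.
Qed.

Lemma xs_I : forall k, Ipred X t k xs.
Proof.
  intros k e He N. destruct (proj2_sig (seqs k) e He N) as [n [Hn Hd]].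
  exists n. split; auto. intros i Hi. rewrite <- (seqs_xs k) by auto. auto.
Qed.
End Build.

Lemma cluster (X : MetricSpace) (HX : compact_space X) (s : nat -> X) :
  exists c, forall e, e > 0 -> forall N, exists n, (n >= N)%nat /\ Defs.dist X (s n) c < e.
Proof.
  exists (xs X HX (fun n _ => s n) (s O) O). intros e He N.
  destruct (xs_I X HX (fun n _ => s n) (s O) 1 e He N) as [n [Hn Hd]].
  exists n. split. exact Hn. apply (Hd O). lia.
Qed.

Definition eps (k : nat) : R := / INR (S k).

Lemma eps_pos k : eps k > 0.
Proof. unfold eps. apply Rinv_0_lt_compat. apply lt_0_INR. lia. Qed.

Lemma eps_small e : e > 0 -> exists k, eps k < e.
Proof.
  intros He. destruct (archimed_cor1 e He) as [N [HN HN0]].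
  destruct N as [|k]; [lia|]. exists k. exact HN.
Qed.

Lemma eps_mono n k : (k <= n)%nat -> eps n <= eps k.
Proof.
  intros H. unfold eps. apply Rinv_le_contravar. apply lt_0_INR; lia. apply le_INR; lia.
Qed.

Lemma dense_X (X : MetricSpace) (HX : compact_space X) (x0 : X) :
  exists d : nat -> X, forall x e, e > 0 -> exists n, Defs.dist X x (d n) < e.
Proof.
  assert (Hn : forall k, exists l : list X, forall x, exists c, In c l /\ Defs.dist X c x < eps k).
  { intros k. apply finite_net; auto. apply eps_pos. }
  set (L := fun k => proj1_sig (constructive_indefinite_description _ (Hn k))).
  assert (HL : forall k x, exists c, In c (L k) /\ Defs.dist X c x < eps k).
  { intros k. exact (proj2_sig (constructive_indefinite_description _ (Hn k))). }
  exists (fun n => let (k, i) := Cantor.of_nat n in nth i (L k) x0).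
  intros x e He. destruct (eps_small e He) as [k Hk].
  destruct (HL k x) as [c [Hc Hd]]. destruct (In_nth _ _ x0 Hc) as [i [Hi Hi']].
  exists (Cantor.to_nat (k, i)). rewrite Cantor.cancel_of_to. rewrite Hi'.
  rewrite Defs.dist_sym. lra.
Qed.

Lemma margin p (f : nat -> nat -> R) e :
  (forall i j, (i < p)%nat -> (j < p)%nat -> i <> j -> f i j > e) ->
  exists h, h > 0 /\ forall i j, (i < p)%nat -> (j < p)%nat -> i <> j -> f i j > e + h.
Proof.
  intros H.
  destruct (list_min (fun ij : nat * nat => if Nat.eqb (fst ij) (snd ij) then 1 else f (fst ij) (snd ij) - e)
              (list_prod (seq 0 p) (seq 0 p))) as [m [Hm Hm']].
  { intros [i j] Hin. apply in_prod_iff in Hin. destruct Hin as [Hi Hj].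
    apply in_seq in Hi, Hj. simpl. destruct (Nat.eqb i j) eqn:E; [lra|].
    apply Nat.eqb_neq in E. specialize (H i j ltac:(lia) ltac:(lia) E). lra. }
  exists (m / 2). split; [lra|]. intros i j Hi Hj Hij.
  assert (Hin : In (i, j) (list_prod (seq 0 p) (seq 0 p))).
  { apply in_prod_iff. split; apply in_seq; lia. }
  specialize (Hm' _ Hin). simpl in Hm'. apply Nat.eqb_neq in Hij. rewrite Hij in Hm'. lra.
Qed.

Lemma nat_max (P : nat -> Prop) B : P O -> (forall p, P p -> (p <= B)%nat) ->
  exists M, P M /\ forall p, P p -> (p <= M)%nat.
Proof.
  revert P. induction B as [|B IH]; intros P H0 HB.
  - exists O. split; auto.
  - destruct (classic (P (S B))) as [HS|HS].
    + exists (S B). split; auto.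
    + apply IH; auto. intros p Hp. specialize (HB p Hp).
      destruct (Nat.eq_dec p (S B)); [subst; contradiction|lia].
Qed.

Lemma pigeon p B (f : nat -> nat) :
  (forall i, (i < p)%nat -> (f i < B)%nat) ->
  (forall i j, (i < p)%nat -> (j < p)%nat -> f i = f j -> i = j) -> (p <= B)%nat.
Proof.
  intros H1 H2.
  assert (Hnd : NoDup (map f (seq 0 p))).
  { apply NoDup_map_NoDup_ForallPairs. intros a b Ha Hb. apply in_seq in Ha, Hb. apply H2; lia.
    apply seq_NoDup. }
  assert (Hinc : incl (map f (seq 0 p)) (seq 0 B)).
  { intros y Hy. apply in_map_iff in Hy. destruct Hy as [x [Hx1 Hx2]]. apply in_seq in Hx2.
    apply in_seq. subst. specialize (H1 x ltac:(lia)). lia. }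
  pose proof (NoDup_incl_length Hnd Hinc). rewrite length_map, !length_seq in H. exact H.
Qed.

Lemma eq_eps (a b : R) : (forall e, e > 0 -> a <= b + e) -> (forall e, e > 0 -> b <= a + e) -> a = b.
Proof.
  intros H1 H2. destruct (Rtotal_order a b) as [H|[H|H]]; auto.
  - specialize (H2 ((b - a)/2) ltac:(lra)). lra.
  - specialize (H1 ((a - b)/2) ltac:(lra)). lra.
Qed.

Lemma tri3 (X : MetricSpace) (a b c : X) : Defs.dist X a c <= Defs.dist X a b + Defs.dist X b c.
Proof. apply Defs.dist_tri. Qed.

Lemma tri4 (X : MetricSpace) (a b c e : X) :
  Defs.dist X a e <= Defs.dist X a b + Defs.dist X b c + Defs.dist X c e.
Proof. pose proof (Defs.dist_tri X a b e). pose proof (Defs.dist_tri X b c e). lra. Qed.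

Section Main.
Context (X : MetricSpace) (HX : compact_space X) (d : nat -> X)
        (Hd : forall x e, e > 0 -> exists n, Defs.dist X x (d n) < e).

Definition dmat (m : nat -> nat) (i j : nat) : R := Defs.dist X (d (m i)) (d (m j)).

Definition AY (Y : MetricSpace) : Prop := forall n k (t : nat -> Y), exists m,
  forall i j, (i < n)%nat -> (j < n)%nat -> close (Defs.dist Y (t i) (t j)) (dmat m i j) (eps k).
Definition BY (Y : MetricSpace) : Prop := forall n k m, exists t : nat -> Y,
  forall i j, (i < n)%nat -> (j < n)%nat -> close (Defs.dist Y (t i) (t j)) (dmat m i j) (eps k).

Section Emb.
Context (Y : MetricSpace) (HY : polish Y) (y0 : Y) (HA : AY Y) (HB : BY Y).

Lemma dense_Y : exists e : nat -> Y, forall y r, r > 0 -> exists n, Defs.dist Y y (e n) < r.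
Proof.
  destruct HY as [_ [D HD]].
  exists (fun n => match D n with Some y => y | None => y0 end).
  intros y r Hr. destruct (HD y r Hr) as [n [z [Hz Hd']]]. exists n. rewrite Hz. exact Hd'.
Qed.

Definition e : nat -> Y := proj1_sig (constructive_indefinite_description _ dense_Y).
Lemma e_dense : forall y r, r > 0 -> exists n, Defs.dist Y y (e n) < r.
Proof. exact (proj2_sig (constructive_indefinite_description _ dense_Y)). Qed.

Definition mA (n : nat) : nat -> nat := proj1_sig (constructive_indefinite_description _ (HA n n e)).
Definition T (n i : nat) : X := d (mA n i).
Lemma T_close n i j : (i < n)%nat -> (j < n)%nat ->
  close (Defs.dist Y (e i) (e j)) (Defs.dist X (T n i) (T n j)) (eps n).
Proof. exact (proj2_sig (constructive_indefinite_description _ (HA n n e)) i j). Qed.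

Definition xY : nat -> X := xs X HX T (d O).

Lemma xY_iso i j : Defs.dist X (xY i) (xY j) = Defs.dist Y (e i) (e j).
Proof.
  assert (Hgen : forall r, r > 0 -> exists n,
     Defs.dist X (T n i) (xY i) < r /\ Defs.dist X (T n j) (xY j) < r /\ eps n < r
     /\ (i < n)%nat /\ (j < n)%nat).
  { intros r Hr. destruct (eps_small r Hr) as [k Hk].
    destruct (xs_I X HX T (d O) (S (Nat.max i j)) r Hr (Nat.max k (S (Nat.max i j)))) as [n [Hn Hdd]].
    exists n. pose proof (eps_mono n k ltac:(lia)).
    split; [apply Hdd; lia|]. split; [apply Hdd; lia|]. split; [lra|]. lia. }
  apply eq_eps; intros r Hr; destruct (Hgen (r/3) ltac:(lra)) as [n [H1 [H2 [H3 [H4 H5]]]]];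
    pose proof (T_close n i j H4 H5) as Hc; unfold close in Hc.
  - pose proof (tri4 X (xY i) (T n i) (T n j) (xY j)).
    rewrite (Defs.dist_sym X (xY i) (T n i)) in H. lra.
  - pose proof (tri4 X (T n i) (xY i) (xY j) (T n j)).
    rewrite (Defs.dist_sym X (xY j) (T n j)) in H. lra.
Qed.

Lemma g_ex y : exists x, forall m, Defs.dist X x (xY m) = Defs.dist Y y (e m).
Proof.
  set (js := fun k => proj1_sig (constructive_indefinite_description _ (e_dense y (eps k) (eps_pos k)))).
  assert (Hjs : forall k, Defs.dist Y y (e (js k)) < eps k).
  { intros k. exact (proj2_sig (constructive_indefinite_description _ (e_dense y (eps k) (eps_pos k)))). }
  destruct (cluster X HX (fun k => xY (js k))) as [c Hc].
  exists c. intros m.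
  assert (Hgen : forall r, r > 0 -> exists n,
     Defs.dist X (xY (js n)) c < r /\ Defs.dist Y y (e (js n)) < r).
  { intros r Hr. destruct (eps_small r Hr) as [k Hk].
    destruct (Hc r Hr k) as [n [Hn Hdd]]. cbv beta in Hdd. exists n. split; [exact Hdd|].
    pose proof (eps_mono n k Hn). specialize (Hjs n). lra. }
  apply eq_eps; intros r Hr; destruct (Hgen (r/2) ltac:(lra)) as [n [H1 H2]];
    pose proof (xY_iso (js n) m) as Hiso.
  - pose proof (tri3 X c (xY (js n)) (xY m)). pose proof (tri3 Y (e (js n)) y (e m)).
    rewrite (Defs.dist_sym X c (xY (js n))) in H. rewrite (Defs.dist_sym Y (e (js n)) y) in H0. lra.
  - pose proof (tri3 X (xY (js n)) c (xY m)). pose proof (tri3 Y y (e (js n)) (e m)). lra.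
Qed.

Definition g (y : Y) : X := proj1_sig (constructive_indefinite_description _ (g_ex y)).
Lemma g_spec y m : Defs.dist X (g y) (xY m) = Defs.dist Y y (e m).
Proof. exact (proj2_sig (constructive_indefinite_description _ (g_ex y)) m). Qed.

Lemma g_iso y y' : Defs.dist X (g y) (g y') = Defs.dist Y y y'.
Proof.
  apply eq_eps; intros r Hr; destruct (e_dense y' (r/2) ltac:(lra)) as [m Hm];
    pose proof (g_spec y m); pose proof (g_spec y' m).
  - pose proof (tri3 X (g y) (xY m) (g y')). pose proof (tri3 Y y y' (e m)).
    rewrite (Defs.dist_sym X (xY m)) in H1. lra.
  - pose proof (tri3 X (g y) (g y') (xY m)). pose proof (tri3 Y y (e m) y').
    rewrite (Defs.dist_sym Y (e m)) in H2. lra.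
Qed.

Lemma g_closed x : (forall r, r > 0 -> exists y, Defs.dist X (g y) x < r) -> exists y, g y = x.
Proof.
  intros H.
  set (ys := fun k => proj1_sig (constructive_indefinite_description _ (H (eps k) (eps_pos k)))).
  assert (Hys : forall k, Defs.dist X (g (ys k)) x < eps k).
  { intros k. exact (proj2_sig (constructive_indefinite_description _ (H (eps k) (eps_pos k)))). }
  destruct HY as [Hc _].
  destruct (Hc ys) as [z Hz].
  { intros r Hr. destruct (eps_small (r/2) ltac:(lra)) as [k Hk]. exists k. intros a b Ha Hb.
    rewrite <- g_iso. pose proof (tri3 X (g (ys a)) x (g (ys b))).
    rewrite (Defs.dist_sym X x) in H0. pose proof (Hys a). pose proof (Hys b).
    pose proof (eps_mono a k Ha). pose proof (eps_mono b k Hb). lra. }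
  exists z. apply Defs.dist_eq0. apply eq_eps; intros r Hr.
  - destruct (Hz (r/2) ltac:(lra)) as [N HN]. destruct (eps_small (r/2) ltac:(lra)) as [k Hk].
    specialize (HN (Nat.max N k) ltac:(lia)). pose proof (Hys (Nat.max N k)).
    pose proof (eps_mono (Nat.max N k) k ltac:(lia)).
    pose proof (tri3 X (g z) (g (ys (Nat.max N k))) x). rewrite g_iso in H2.
    rewrite Defs.dist_sym in HN. lra.
  - pose proof (Defs.dist_nonneg X (g z) x). lra.
Qed.

Definition sepY (r : R) (p : nat) (t : nat -> Y) : Prop :=
  forall i j, (i < p)%nat -> (j < p)%nat -> i <> j -> Defs.dist Y (t i) (t j) > r.

Lemma pack_bound r : r > 0 -> exists B, forall p t, sepY r p t -> (p <= B)%nat.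
Proof.
  intros Hr. destruct (finite_net X HX (r/2) ltac:(lra)) as [l Hl].
  exists (length l). intros p t Hs.
  destruct (margin p (fun i j => Defs.dist Y (t i) (t j)) r Hs) as [h [Hh Hm]].
  destruct (eps_small h Hh) as [k Hk].
  destruct (HA p k t) as [m Hc].
  set (u := fun i => d (m i)).
  assert (Hu : forall i j, (i < p)%nat -> (j < p)%nat -> i <> j -> Defs.dist X (u i) (u j) > r).
  { intros i j Hi Hj Hij. specialize (Hc i j Hi Hj). specialize (Hm i j Hi Hj Hij).
    unfold close, dmat in Hc. unfold u. lra. }
  assert (Hidx : forall i, exists idx, (idx < length l)%nat /\ Defs.dist X (nth idx l (d O)) (u i) < r/2).
  { intros i. destruct (Hl (u i)) as [c [Hc1 Hc2]]. destruct (In_nth _ _ (d O) Hc1) as [idx [H1 H2]].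
    exists idx. rewrite H2. auto. }
  set (f := fun i => proj1_sig (constructive_indefinite_description _ (Hidx i))).
  assert (Hf : forall i, (f i < length l)%nat /\ Defs.dist X (nth (f i) l (d O)) (u i) < r/2).
  { intros i. exact (proj2_sig (constructive_indefinite_description _ (Hidx i))). }
  apply (pigeon p (length l) f).
  - intros i _. apply Hf.
  - intros i j Hi Hj Hfij. destruct (Nat.eq_dec i j) as [E|E]; auto. exfalso.
    specialize (Hu i j Hi Hj E). destruct (Hf i) as [_ Hfi]. destruct (Hf j) as [_ Hfj].
    rewrite Hfij in Hfi.
    pose proof (tri3 X (u i) (nth (f j) l (d O)) (u j)). rewrite (Defs.dist_sym X (u i) (nth (f j) l (d O))) in H. lra.
Qed.

Lemma g_surj x : exists y, g y = x.
Proof.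
  apply NNPP. intros Hno.
  assert (Hr : exists r, r > 0 /\ forall y, r <= Defs.dist X (g y) x).
  { apply NNPP. intros Hn. apply Hno. apply g_closed. intros r Hr. apply NNPP. intros Hn2.
    apply Hn. exists r. split; auto. intros y. apply Rnot_lt_le. intros Hlt. apply Hn2. exists y. auto. }
  destruct Hr as [r [Hr Hry]].
  destruct (pack_bound (r/2) ltac:(lra)) as [B HBd].
  destruct (nat_max (fun p => exists t, sepY (r/2) p t) B) as [M [[tS HtS] HM]].
  { exists (fun _ => y0). intros i j Hi; lia. }
  { intros p [t Ht]. eapply HBd; eauto. }
  set (w := fun i => if Nat.ltb i M then g (tS i) else x).
  assert (Hw : forall i j, (i < S M)%nat -> (j < S M)%nat -> i <> j -> Defs.dist X (w i) (w j) > r/2).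
  { intros i j Hi Hj Hij. unfold w.
    destruct (Nat.ltb i M) eqn:Ei, (Nat.ltb j M) eqn:Ej.
    - apply Nat.ltb_lt in Ei, Ej. rewrite g_iso. apply HtS; auto.
    - specialize (Hry (tS i)). lra.
    - specialize (Hry (tS j)). rewrite Defs.dist_sym. lra.
    - apply Nat.ltb_ge in Ei, Ej. lia. }
  destruct (margin (S M) (fun i j => Defs.dist X (w i) (w j)) (r/2) Hw) as [h [Hh Hm]].
  assert (Hmi : forall i, exists n, Defs.dist X (w i) (d n) < h/4).
  { intros i. apply Hd. lra. }
  set (m := fun i => proj1_sig (constructive_indefinite_description _ (Hmi i))).
  assert (Hmm : forall i, Defs.dist X (w i) (d (m i)) < h/4).
  { intros i. exact (proj2_sig (constructive_indefinite_description _ (Hmi i))). }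
  destruct (eps_small (h/2) ltac:(lra)) as [k Hk].
  destruct (HB (S M) k m) as [t' Ht'].
  assert (Hsep : sepY (r/2) (S M) t').
  { intros i j Hi Hj Hij. specialize (Ht' i j Hi Hj). specialize (Hm i j Hi Hj Hij).
    unfold close, dmat in Ht'. simpl in Hm.
    pose proof (tri4 X (w i) (d (m i)) (d (m j)) (w j)).
    pose proof (Hmm i). pose proof (Hmm j). rewrite (Defs.dist_sym X (d (m j))) in H. lra. }
  specialize (HM (S M) (ex_intro _ t' Hsep)). lia.
Qed.

Lemma emb_iso : isometric Y X.
Proof. exists g. split. apply g_iso. apply g_surj. Qed.
End Emb.

Lemma iso_AB (Y : MetricSpace) : isometric Y X -> AY Y /\ BY Y.
Proof.
  intros [f [Hf Hs]]. split.
  - intros n k t.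
    assert (Hm : forall i, exists mi, Defs.dist X (f (t i)) (d mi) < eps k / 2).
    { intros i. apply Hd. pose proof (eps_pos k). lra. }
    exists (fun i => proj1_sig (constructive_indefinite_description _ (Hm i))).
    intros i j _ _. unfold close, dmat.
    pose proof (proj2_sig (constructive_indefinite_description _ (Hm i))) as H1.
    pose proof (proj2_sig (constructive_indefinite_description _ (Hm j))) as H2.
    simpl in H1, H2.
    set (a := proj1_sig (constructive_indefinite_description _ (Hm i))) in *.
    set (b := proj1_sig (constructive_indefinite_description _ (Hm j))) in *.
    rewrite <- Hf.
    pose proof (tri4 X (f (t i)) (d a) (d b) (f (t j))).
    pose proof (tri4 X (d a) (f (t i)) (f (t j)) (d b)).
    rewrite (Defs.dist_sym X (d b) (f (t j))) in H. rewrite (Defs.dist_sym X (d a) (f (t i))) in H0. lra.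
  - intros n k m.
    exists (fun i => proj1_sig (constructive_indefinite_description _ (Hs (d (m i))))).
    intros i j _ _. unfold close, dmat.
    pose proof (proj2_sig (constructive_indefinite_description _ (Hs (d (m i))))) as H1.
    pose proof (proj2_sig (constructive_indefinite_description _ (Hs (d (m j))))) as H2.
    simpl in H1, H2. rewrite <- Hf, H1, H2. pose proof (eps_pos k). lra.
Qed.

End Main.

Definition phiA (X : MetricSpace) (d : nat -> X) (n k : nat) : formula :=
  QAll n (OrN n (fun m => CloseAll n (dmat X d m) (eps k))).
Definition phiB (X : MetricSpace) (d : nat -> X) (n k : nat) : formula :=
  AndN n (fun m => QEx n (CloseAll n (dmat X d m) (eps k))).
Definition phi (X : MetricSpace) (d : nat -> X) : formula :=
  FAnd (fun n => FAnd (fun k => FAnd (fun b =>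
    match b with O => phiA X d n k | _ => phiB X d n k end))).

Lemma phi_sentence X d : sentence (phi X d).
Proof.
  intros v. unfold phi. cbn [free]. intros [n [k [b H]]]. destruct b.
  - unfold phiA in H. apply free_QAll in H. destruct H as [H1 H2].
    apply free_OrN in H2. destruct H2 as [m H2]. apply free_CloseAll in H2. lia.
  - unfold phiB in H. apply free_AndN in H. destruct H as [m H].
    apply free_QEx in H. destruct H as [H1 H2]. apply free_CloseAll in H2. lia.
Qed.

Lemma close_trunc X d (Y : MetricSpace) n (t : nat -> Y) m k :
  (forall i j, (i < n)%nat -> (j < n)%nat -> close (Defs.dist Y (t i) (t j)) (dmat X d (trunc n m) i j) (eps k)) <->
  (forall i j, (i < n)%nat -> (j < n)%nat -> close (Defs.dist Y (t i) (t j)) (dmat X d m i j) (eps k)).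
Proof.
  unfold dmat. split; intros H i j Hi Hj; specialize (H i j Hi Hj);
    rewrite ?(trunc_lt n m i Hi), ?(trunc_lt n m j Hj) in *; exact H.
Qed.

Lemma sat_phi X d (Y : MetricSpace) (y0 : Y) :
  models Y (phi X d) <-> AY X d Y /\ BY X d Y.
Proof.
  unfold models, phi. cbn [sat]. split.
  - intros H. split.
    + intros n k t. specialize (H n k O). unfold phiA in H.
      rewrite (sat_QAll Y y0) in H. specialize (H t). rewrite sat_OrN in H.
      destruct H as [m H]. rewrite sat_CloseAll in H. exists (trunc n m). exact H.
    + intros n k m. specialize (H n k 1%nat). unfold phiB in H. cbv iota in H.
      rewrite sat_AndN in H. specialize (H m). rewrite (sat_QEx Y y0) in H.
      destruct H as [t H]. rewrite sat_CloseAll in H. exists t. apply (close_trunc X d Y n t m k). exact H.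
  - intros [HA HB] n k b. destruct b.
    + unfold phiA. rewrite (sat_QAll Y y0). intros t. rewrite sat_OrN.
      destruct (HA n k t) as [m Hm]. exists m. rewrite sat_CloseAll.
      apply close_trunc. exact Hm.
    + unfold phiB. rewrite sat_AndN. intros m. rewrite (sat_QEx Y y0).
      destruct (HB n k (trunc n m)) as [t Ht]. exists t. rewrite sat_CloseAll. exact Ht.
Qed.

Lemma models_inh X d (Y : MetricSpace) : models Y (phi X d) -> inhabited Y.
Proof.
  unfold models, phi. cbn [sat]. intros H. specialize (H 1%nat O 1%nat).
  unfold phiB in H. cbv iota in H. rewrite sat_AndN in H. specialize (H (fun _ => O)).
  simpl in H. destruct H as [a _]. exact (inhabits a).
Qed.

Theorem mainTheorem5 :
  forall X : MetricSpace, compact_space X ->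
  exists phi : formula, sentence phi /\
    forall Y : MetricSpace, polish Y -> (models Y phi <-> isometric Y X).
Proof.
  intros X HX. destruct (classic (inhabited X)) as [[x0]|HXe].
  - destruct (dense_X X HX x0) as [d Hd].
    exists (phi X d). split; [apply phi_sentence|].
    intros Y HY. split.
    + intros Hm. destruct (models_inh X d Y Hm) as [y0].
      rewrite (sat_phi X d Y y0) in Hm. destruct Hm as [HA HB].
      exact (emb_iso X HX d Hd Y HY y0 HA HB).
    + intros Hi. pose proof (iso_AB X d Hd Y Hi) as [HA HB].
      destruct Hi as [f [_ Hs]]. destruct (Hs x0) as [y0 _].
      apply (sat_phi X d Y y0). auto.
  - exists (FForall 0 (FNot (FEq 0 0))). split.
    + intros v. simpl. intros [H1 [H2|H2]]; contradiction.
    + intros Y HY. unfold models. simpl. split.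
      * intros H. exists (fun y => False_rect _ (H y eq_refl)). split.
        -- intros a. exfalso. exact (H a eq_refl).
        -- intros x. exfalso. apply HXe. exact (inhabits x).
      * intros [f _] a _. apply HXe. exact (inhabits (f a)).
Qed.
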